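(* For each $k\in\mathbb{N}$ let $f_{n,k}$ be the number of forkless monomials $\mathfrak{m}\in\mathfrak{M}$ of total degree $k$. Then, as formal power series in $\mathbb{Z}[[t]]$, $$\sum_{k\in\mathbb{N}}f_{n,k}t^k=\frac{(1+0t)(1+1t)\cdots(1+(n-2)t)}{(1-t)^{n-1}}.$$
   Context: Let $n$ be a positive integer and $\mathbb{N}=\{0,1,2,\dots\}$. Let $\mathfrak{M}$ be the set of monomials in the indeterminates $x_{i,j}$, $1\le i<j\le n$. A monomial $\mathfrak{m}\in\mathfrak{M}$ is forkless if there is no triple $1\le i<j<k\le n$ with $x_{i,j}x_{i,k}\mid\mathfrak{m}$. *)

(* Defs.v *)
From HB Require Import structures.
From mathcomp Require Import all_boot all_order all_algebra.
Set Implicit Arguments. Unset Strict Implicit. Unset Printing Implicit Defensive.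
Import Order.TTheory GRing.Theory Num.Theory.

(* Indeterminates x_{i,j}, 1 <= i < j <= n, indexed here by pairs (i,j) of
   'I_n (0-based) with i < j. *)
Definition var (n : nat) := {p : 'I_n * 'I_n | (p.1 < p.2)%N}.

(* A monomial of total degree k is an exponent vector e : var n -> nat with
   \sum e = k; every exponent is then <= k, so such monomials are exactly the
   finite functions e : var n -> 'I_k.+1 with \sum e = k. *)
Definition degree (n k : nat) (e : {ffun var n -> 'I_k.+1}) : nat :=
  \sum_(v : var n) (e v : nat).

Definition forkless (n k : nat) (e : {ffun var n -> 'I_k.+1}) : bool :=
  [forall v1 : var n, forall v2 : var n,
     ~~ [&& (val v1).1 == (val v2).1, ((val v1).2 < (val v2).2)%N,
            (0 < e v1)%N & (0 < e v2)%N]].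

Definition f (n k : nat) : nat :=
  #|[set e : {ffun var n -> 'I_k.+1} | (degree e == k) && forkless e]|.

Definition numer (n : nat) : {poly int} :=
  \prod_(m < n.-1) (1 + (m%:Z) *: 'X).

Definition denom (n : nat) : {poly int} := (1 - 'X) ^+ n.-1.

(* Main.v *)
Require Import Defs.
From HB Require Import structures.
From mathcomp Require Import all_boot all_order all_algebra.
From mathcomp Require Import ring zify.
Import Order.TTheory GRing.Theory Num.Theory.
Local Open Scope ring_scope.

Definition S (K : nat) : {poly int} := \sum_(d < K) 'X^(d.+1).
Definition P (n K : nat) : {poly int} := \prod_(i < n) (1 + S K *+ (n - i.+1)).
Definition eqm (m : nat) (p q : {poly int}) := forall i, (i < m)%N -> p`_i = q`_i.

Lemma eqmM m p p' q q' : eqm m p p' -> eqm m q q' -> eqm m (p * q) (p' * q').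
Proof.
move=> hp hq i lim; rewrite !coefM; apply: eq_bigr => j _.
rewrite hp ?hq //; first by apply: leq_ltn_trans (leq_subr _ _) lim.
by apply: leq_trans (ltn_ord j) _.
Qed.

Lemma eqm_prod m N (F G : 'I_N -> {poly int}) :
  (forall i, eqm m (F i) (G i)) -> eqm m (\prod_i F i) (\prod_i G i).
Proof.
move=> h; apply: (big_ind2 (eqm m)) => //.
by move=> ? ? ? ? ; apply: eqmM.
Qed.

Lemma coefS K i : (S K)`_i = ((0 < i)%N && (i <= K)%N)%:R.
Proof.
elim: K => [|K IH]; first by rewrite /S big_ord0 coef0 ?andbF; case: i.
rewrite /S big_ord_recr /= coefD -/(S K) IH coefXn.
move: IH; case: i => [|i] //= _.
rewrite eqSS ltnS.
by case: (ltngtP i K) => //= _; rewrite ?addr0 ?add0r.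
Qed.

Lemma mulS K : (1 - 'X) * S K = 'X - 'X^(K.+1) :> {poly int}.
Proof.
elim: K => [|K IH]; first by rewrite /S big_ord0 mulr0 expr1 subrr.
rewrite /S big_ord_recr /= mulrDr -/(S K) IH.
rewrite !exprS; ring.
Qed.

Lemma eqm_trunc n m k : (m <= k)%N -> (P n k)`_m = (P n m)`_m.
Proof.
move=> mk; suff: eqm m.+1 (P n k) (P n m) by apply.
apply: eqm_prod => i j lj; rewrite !coefD !coefMn !coefS.
by rewrite (leq_trans (lj : (j <= m)%N) mk) (lj : (j <= m)%N).
Qed.
Lemma card_gt n (i : 'I_n) : #|[pred j : 'I_n | (i < j)%N]| = (n - i.+1)%N.
Proof.
have -> : #|[pred j : 'I_n | (i < j)%N]| = (\sum_(j < n | (i < j)%N) 1)%N by rewrite sum1_card.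
rewrite -(big_mkord (fun j => (i < j)%N) (fun _ => 1%N)) (big_cat_nat (n:=i.+1)) //=.
rewrite big1_seq ?add0n; last first.
  move=> j /andP[ij]; rewrite mem_iota add0n subn0 ltnS => /andP[_ ji].
  by rewrite leqNgt ij in ji.
rewrite big_mkcond /= (eq_big_nat _ _ (F2 := fun _ => 1%N)).
  by rewrite sum_nat_const_nat muln1.
by move=> j /andP[ij _]; rewrite ij.
Qed.

Definition Q n K (i : 'I_n) (p : 'I_n * 'I_K.+1) : bool :=
  if p.2 == ord0 then p.1 == i else (i < p.1)%N.
Arguments Q {n K}.

Lemma SE K : \sum_(d : 'I_K.+1 | d != ord0) 'X^d = S K.
Proof.
rewrite big_mkcond big_ord_recl /= add0r /S.
by apply: eq_bigr => d _; rewrite /bump leq0n.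
Qed.

Lemma rowsum n K (i : 'I_n) :
  \sum_(p : 'I_n * 'I_K.+1 | Q i p) 'X^(p.2) = 1 + S K *+ (n - i.+1) :> {poly int}.
Proof.
rewrite (bigID (fun p => p.2 == ord0)) /=.
rewrite (big_pred1 (i, ord0)); last first.
  by move=> [a b]; rewrite /Q /= xpair_eqE; case: (b == ord0); rewrite ?andbT ?andbF.
rewrite expr0; congr (_ + _).
rewrite (eq_bigl (fun p : 'I_n * 'I_K.+1 => (i < p.1)%N && (p.2 != ord0))); last first.
  by move=> [a b]; rewrite /Q /=; case: (b == ord0); rewrite ?andbT ?andbF.
rewrite -(pair_big_dep (fun j : 'I_n => (i < j)%N) (fun _ (d : 'I_K.+1) => d != ord0) (fun _ (d : 'I_K.+1) => 'X^d : {poly int})) /=.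
rewrite (eq_bigr (fun _ => S K)); last by move=> j _; apply: SE.
by rewrite sumr_const card_gt.
Qed.

Section Bij.
Variables (n K : nat).
Local Notation G := {ffun 'I_n -> 'I_n * 'I_K.+1}.
Local Notation E := {ffun var n -> 'I_K.+1}.

Definition wt (g : G) : nat := \sum_i ((g i).2 : nat).
Definition phi (g : G) : E :=
  [ffun v => if (g (val v).1).1 == (val v).2 then (g (val v).1).2 else ord0].

Lemma famP (g : G) i : g \in family (@Q n K) -> Q i (g i).
Proof. by move/familyP => /(_ i). Qed.
Arguments famP {g}.

Lemma zero_row (g : G) i : g \in family (@Q n K) -> (g i).2 == ord0 -> g i = (i, ord0).
Proof.
move=> /(famP i); rewrite /Q => + h; rewrite h => /eqP h1.
by move/eqP: h => h2; rewrite [g i]surjective_pairing h1 h2.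
Qed.

Lemma degree_phi (g : G) : g \in family (@Q n K) -> degree (phi g) = wt g.
Proof.
move=> gF; rewrite /degree /wt (partition_big (fun v : var n => (val v).1) predT) //.
apply: eq_bigr => i _.
case h: ((g i).2 == ord0).
  rewrite big1; first by move/eqP: h => ->.
  move=> v /eqP vi; rewrite ffunE vi; case: ifP => // _.
  by move/eqP: h => ->.
have lt : (i < (g i).1)%N by move: (famP i gF); rewrite /Q h.
pose v0 : var n := exist _ (i, (g i).1) lt.
rewrite (bigD1 v0) //= ffunE /= eqxx big1 ?addn0 //.
move=> v /andP[/eqP vi neq]; rewrite ffunE vi; case: eqP => // e.
case/negP: neq; apply/eqP/val_inj => /=.
by rewrite e -vi -surjective_pairing.
Qed.

Lemma phi_forkless (g : G) : forkless (phi g).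
Proof.
apply/forallP => v1; apply/forallP => v2; apply/negP => /and4P[/eqP e12 lt].
rewrite !ffunE; case: eqP => [h1|]; last by rewrite ltnn.
case: eqP => [h2|]; last by rewrite ltnn.
by move: lt; rewrite -h1 -h2 e12 ltnn.
Qed.

Lemma key (g1 g2 : G) i : phi g1 = phi g2 -> (g1 i).2 != ord0 ->
  g1 \in family (@Q n K) -> g2 i = g1 i.
Proof.
move=> e h gF.
have lt : (i < (g1 i).1)%N by move: (famP i gF); rewrite /Q (negbTE h).
pose v0 : var n := exist _ (i, (g1 i).1) lt.
have := congr1 (fun f : E => f v0) e; rewrite !ffunE /=.
case: ifP => [_|/negP []]; last exact/eqP.
case: eqP => [e1 e2|_ e2]; last by rewrite e2 eqxx in h.
by rewrite [g2 i]surjective_pairing e1 -e2 -surjective_pairing.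
Qed.

Arguments key {g1 g2 i}.
Lemma phi_inj : {in family (@Q n K) &, injective phi}.
Proof.
move=> g1 g2 h1 h2 e; apply/ffunP => i.
case z1: ((g1 i).2 == ord0); case z2: ((g2 i).2 == ord0).
- by rewrite (zero_row _ _ h1 z1) (zero_row _ _ h2 z2).
- exact: (key (esym e) (negbT z2) h2).
- exact: (esym (key e (negbT z1) h1)).
- exact: (esym (key e (negbT z1) h1)).
Qed.

Definition psi (e : E) : G :=
  [ffun i => if [pick v : var n | ((val v).1 == i) && (0 < e v)%N] is Some v
             then ((val v).2, e v) else (i, ord0)].

Lemma psi_fam e : psi e \in family (@Q n K).
Proof.
apply/familyP => i; rewrite ffunE unfold_in /Q.
case: pickP => [v /andP[/eqP vi pos]|_] /=; last by rewrite !eqxx.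
have -> : (e v == ord0) = false by apply/negbTE; rewrite -lt0n.
by rewrite -vi; case: v {vi pos} => [[a b] hab].
Qed.

Lemma phi_psi e : forkless e -> phi (psi e) = e.
Proof.
move=> fk; apply/ffunP => v; rewrite !ffunE.
case: pickP => [w /andP[/eqP wi pos]|none] /=; last first.
  case: eqP => _; move: (none v); rewrite eqxx /= => /negbT;
  by rewrite -eqn0Ngt => /eqP h; apply: val_inj; rewrite /= h.
case: eqP => [e2|ne].
  have -> : w = v by apply: val_inj; rewrite [val w]surjective_pairing [val v]surjective_pairing wi e2.
  by [].
apply: val_inj => /=; symmetry; apply/eqP; rewrite eqn0Ngt; apply/negP => posv.
move/forallP: fk => fk.
case: (ltngtP (val w).2 (val v).2) => [lt|lt|eq]; last by case: ne; apply: val_inj.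
- by move/forallP: (fk w) => /(_ v); rewrite wi eqxx lt pos posv.
- by move/forallP: (fk v) => /(_ w); rewrite wi eqxx lt pos posv.
Qed.

Lemma card_bij m :
  #|[set e : E | (degree e == m) && forkless e]| =
  #|[set g : G | (g \in family (@Q n K)) && (wt g == m)]|.
Proof.
rewrite -(card_in_imset (f := phi)); last first.
  by move=> g1 g2; rewrite !inE => /andP[h1 _] /andP[h2 _]; apply: phi_inj.
apply: eq_card => e; rewrite inE; apply/idP/imsetP.
  move=> /andP[de fk]; exists (psi e); last by rewrite phi_psi.
  by rewrite inE psi_fam -degree_phi ?psi_fam // phi_psi.
move=> [g]; rewrite inE => /andP[gF /eqP wg] ->.
by rewrite degree_phi // wg eqxx phi_forkless.
Qed.
End Bij.

Lemma comb n m : (f n m)%:Z = (P n m)`_m.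
Proof.
rewrite /f (card_bij n m m) /P.
rewrite (eq_bigr (fun i => \sum_(p : 'I_n * 'I_m.+1 | Q i p) 'X^(p.2))); last first.
  by move=> i _; rewrite rowsum.
rewrite bigA_distr_big_dep coef_sum.
rewrite (eq_bigr (fun g : {ffun 'I_n -> 'I_n * 'I_m.+1} => ((@wt n m g == m) : nat)%:R)); last first.
  by move=> g _; rewrite prodrXr coefXn eq_sym.
rewrite -natr_sum natz; congr Posz.
rewrite -sum1_card big_mkcond [RHS]big_mkcond /=.
apply: eq_bigr => g _; rewrite inE.
by case: (g \in family _); case: (@wt n m g == m).
Qed.
Lemma factor_eq k c :
  (1 - 'X) * (1 + S k *+ c.+1) = (1 + 'X *+ c) - 'X^(k.+1) *+ c.+1 :> {poly int}.
Proof.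
rewrite mulrDr mulr1 mulrnAr mulS.
rewrite mulrnBl mulrSr; ring.
Qed.

Theorem proposition4p13 (n : nat) (hn : (0 < n)%N) (k : nat) :
  \sum_(i < k.+1) (denom n)`_i * ((f n (k - i))%:Z) = (numer n)`_k.
Proof.
rewrite (eq_bigr (fun i : 'I_k.+1 => (denom n)`_i * (P n k)`_(k - i))); last first.
  by move=> i _; rewrite comb eqm_trunc // leq_subr.
rewrite -coefM.
suff: eqm k.+1 (denom n * P n k) (numer n) by apply.
move: hn; case: n => [//|n] _.
rewrite /denom /P /numer big_ord_recr /= subnn mulr0n addr0 mulr1 /=.
have -> : (1 - 'X : {poly int}) ^+ n = \prod_(i < n) (1 - 'X).
  by rewrite prodr_const card_ord.
rewrite -big_split /=.
rewrite (reindex_inj rev_ord_inj) /=.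
apply: eqm_prod => i j lj.
rewrite subSS subKn //.
rewrite factor_eq -natz scaler_nat coefB coefMn coefXn.
by rewrite (ltn_eqF lj) mul0rn subr0.
Qed.
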